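(* Let $G=(V,E,w)$ be an undirected graph without self-loops, with $n\ge 2$ vertices, positive edge weights and conductance $\Phi_G>0$. Let $\mathcal{T}^*$ be an optimal HC tree of $G$ with dense branch $(A_0,\dots,A_k)$, $k\ge 0$. If $|A_k|\ge (n-1)/2$, then every HC tree $\mathcal{T}$ of $G$ satisfies $\mathrm{cost}_G(\mathcal{T})\le \frac{8}{\Phi_G}\cdot\mathrm{cost}_G(\mathcal{T}^* )$.
   Context: $d_u=\sum_v w_{uv}$, $\mathrm{vol}(S)=\sum_{u\in S}d_u$, $\mathrm{vol}(G)=\mathrm{vol}(V)$; $\Phi_G(S)=w(S,V\setminus S)/\mathrm{vol}(S)$, $\Phi_G=\min\{\Phi_G(S):\emptyset\ne S\subset V,\ \mathrm{vol}(S)\le\mathrm{vol}(V)/2\}$. An HC tree is a rooted binary tree whose leaves are in bijection with $V$, nodes identified with their leaf vertex sets and $|N|$ the number of such vertices; $\mathrm{cost}_G(\mathcal{T})=\sum_{\{u,v\}\in E}w_{uv}|\mathsf{leaves}(\mathcal{T}[u\vee v])|$ with $u\vee v$ the lowest common ancestor. Dense branch: the path $(A_0,\dots,A_k)$ from the root $A_0$ where each $A_{i+1}$ is the child of $A_i$ of larger volume, and $A_k$ has $\mathrm{vol}(A_k)>\mathrm{vol}(G)/2$ while both its children have volume at most $\mathrm{vol}(G)/2$. *)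

(* Defs.v *)
From HB Require Import structures.
From mathcomp Require Import all_boot all_order all_algebra.
Set Implicit Arguments. Unset Strict Implicit. Unset Printing Implicit Defensive.
Import Order.TTheory GRing.Theory Num.Theory.
Local Open Scope ring_scope.

Inductive hctree (V : Type) : Type :=
| Leaf of V
| Node of hctree V & hctree V.
Arguments Leaf {V}.
Arguments Node {V}.

Fixpoint leaves {V : Type} (t : hctree V) : seq V :=
  match t with
  | Leaf v => [:: v]
  | Node l r => leaves l ++ leaves r
  end.

Definition is_hc_tree {V : finType} (t : hctree V) : Prop :=
  perm_eq (leaves t) (enum V).

Fixpoint lca_size {V : eqType} (t : hctree V) (u v : V) : nat :=
  match t with
  | Leaf _ => size (leaves t)
  | Node l r =>
      if (u \in leaves l) && (v \in leaves l) then lca_size l u v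
      else if (u \in leaves r) && (v \in leaves r) then lca_size r u v
      else size (leaves t)
  end.

Section Graph.
Variables (R : realFieldType) (V : finType) (w : V -> V -> R).

Definition deg (u : V) : R := \sum_(v : V) w u v.
Definition vol (S : {set V}) : R := \sum_(u in S) deg u.
Definition volG : R := vol [set: V].
Definition cut (S : {set V}) : R := \sum_(u in S) \sum_(v in ~: S) w u v.
Definition cond_set (S : {set V}) : R := cut S / vol S.

Definition cond_adm (S : {set V}) : bool :=
  [&& S != set0, S != [set: V] & vol S <= volG / 2%:R].

Definition is_conductance (Phi : R) : Prop :=
  (exists2 S, cond_adm S & Phi = cond_set S) /\
  (forall S, cond_adm S -> Phi <= cond_set S).

(* cost_G(T) = sum over edges {u,v} of w_uv |leaves(T[u v v])|; written as
   half of the sum over ordered pairs (w symmetric, no self loops). *)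
Definition hc_cost (t : hctree V) : R :=
  2%:R^-1 * \sum_(u : V) \sum_(v : V) w u v * (lca_size t u v)%:R.

Definition vol_node (t : hctree V) : R := \sum_(u <- leaves t) deg u.

(* Last node A_k of the dense branch: starting at the root, move to the child
   of larger volume until both children have volume <= vol(G)/2. *)
Fixpoint dense_end (t : hctree V) : hctree V :=
  match t with
  | Leaf _ => t
  | Node l r =>
      if (vol_node l <= volG / 2%:R) && (vol_node r <= volG / 2%:R) then t
      else if vol_node r <= vol_node l then dense_end l else dense_end r
  end.

Definition optimal_hc_tree (t : hctree V) : Prop :=
  is_hc_tree t /\ forall t', is_hc_tree t' -> hc_cost t <= hc_cost t'.
End Graph.

(* Main.v *)
Require Import Defs.
From HB Require Import structures.
From mathcomp Require Import all_boot all_order all_algebra.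
From mathcomp Require Import zify ring lra.
Import Order.TTheory GRing.Theory Num.Theory.
Local Open Scope ring_scope.
Set Implicit Arguments. Unset Strict Implicit.

Fixpoint subtree {V : Type} (s t : hctree V) : Prop :=
  s = t \/ match t with Leaf _ => False | Node l r => subtree s l \/ subtree s r end.

Lemma size_leaves_gt0 {V : Type} (t : hctree V) : (0 < size (leaves t))%N.
Proof. elim: t => //= l IHl r IHr; by rewrite size_cat addn_gt0 IHl. Qed.

Lemma lca_le_size {V : eqType} (t : hctree V) u v : (lca_size t u v <= size (leaves t))%N.
Proof.
elim: t => [x|l IHl r IHr] //=.
case: ifP => _; first by apply: leq_trans IHl _; rewrite size_cat leq_addr.
case: ifP => _ //; by apply: leq_trans IHr _; rewrite size_cat leq_addl.
Qed.

Lemma lca_sym {V : eqType} (t : hctree V) u v : lca_size t u v = lca_size t v u.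
Proof.
elim: t => [x|l IHl r IHr] //=.
by rewrite (andbC (v \in leaves l)) (andbC (v \in leaves r)) IHl IHr.
Qed.

Lemma subtree_uniq {V : eqType} (s t : hctree V) :
  subtree s t -> uniq (leaves t) -> uniq (leaves s).
Proof.
elim: t => [x|l IHl r IHr] /=; first by case=> // ->.
case=> [->//|[H|H]]; rewrite cat_uniq => /and3P[ul _ ur]; [exact: IHl|exact: IHr].
Qed.

Lemma subtree_mem {V : eqType} (s t : hctree V) u :
  subtree s t -> u \in leaves s -> u \in leaves t.
Proof.
elim: t => [x|l IHl r IHr] /=; first by case=> // ->.
case=> [->//|[H|H]] us; rewrite mem_cat; [by rewrite (IHl H us)|by rewrite (IHr H us) orbT].
Qed.

Lemma lca_sub {V : eqType} (s t : hctree V) u v :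
  subtree s t -> uniq (leaves t) -> u \in leaves s ->
  (lca_size s u v <= lca_size t u v)%N.
Proof.
elim: t => [x|l IHl r IHr] /=; first by case=> // ->.
case=> [-> _ _ //|Hs]; rewrite cat_uniq => /and3P[ul dis ur] us.
case: Hs => Hs.
- have ul' := @subtree_mem _ _ _ _ Hs us.
  have ur' : u \notin leaves r by apply: contra dis => ur'; apply/hasP; exists u.
  rewrite ul' /=; case: ifP => vl; first exact: IHl.
  rewrite (negbTE ur') /=; apply: leq_trans (IHl Hs ul us) _.
  by apply: leq_trans (lca_le_size _ _ _) _; rewrite size_cat leq_addr.
- have ur' := @subtree_mem _ _ _ _ Hs us.
  have ul' : u \notin leaves l by apply: contra dis => ul'; apply/hasP; exists u.
  rewrite (negbTE ul') ur' /=; case: ifP => vr; first exact: IHr.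
  apply: leq_trans (IHr Hs ur us) _.
  by apply: leq_trans (lca_le_size _ _ _) _; rewrite size_cat leq_addl.
Qed.

Section G.
Variables (R : realFieldType) (V : finType) (w : V -> V -> R).
Hypothesis w_sym : forall u v, w u v = w v u.
Hypothesis w_noloop : forall u, w u u = 0.
Hypothesis w_ge0 : forall u v, 0 <= w u v.

Lemma subtree_dense t : subtree (dense_end w t) t.
Proof.
elim: t => [x|l IHl r IHr] /=; first by left.
case: ifP => _; first by left.
by case: ifP => _; right; [left|right].
Qed.

Lemma vol_node_Node l r : vol_node w (Node l r) = vol_node w l + vol_node w r.
Proof. by rewrite /vol_node /= big_cat. Qed.

Lemma vol_node_Leaf x : vol_node w (Leaf x) = deg w x.
Proof. by rewrite /vol_node /= big_seq1. Qed.

Lemma dense_spec t : volG w / 2%:R < vol_node w t ->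
  (exists B C, dense_end w t = Node B C /\ vol_node w B <= volG w / 2%:R
     /\ vol_node w C <= volG w / 2%:R /\ volG w / 2%:R < vol_node w (Node B C))
  \/ (exists x, dense_end w t = Leaf x /\ volG w / 2%:R < deg w x).
Proof.
elim: t => [x|l IHl r IHr] /= H.
  by right; exists x; split=> //; rewrite -vol_node_Leaf.
case: ifP => [/andP[Hl Hr]|Hn]; first by left; exists l, r.
move/negbT: Hn; rewrite negb_and -!ltNge => Hn.
case: ifP => Hrl.
- apply: IHl; case/orP: Hn => // Hr'; exact: lt_le_trans Hr' Hrl.
- move/negbT: Hrl; rewrite -ltNge => Hrl.
  apply: IHr; case/orP: Hn => // Hl'; exact: lt_trans Hl' Hrl.
Qed.

Lemma deg_ge0 u : 0 <= deg w u.
Proof. by apply: sumr_ge0 => v _. Qed.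

Lemma volGE : volG w = \sum_u deg w u.
Proof. by rewrite /volG /vol; apply: eq_bigl => u; rewrite in_setT. Qed.

Lemma deg_half x : deg w x + deg w x <= volG w.
Proof.
rewrite volGE (bigD1 x) //= lerD2l.
have -> : deg w x = \sum_(v | v != x) w v x.
  rewrite /deg (bigD1 x) //= w_noloop add0r; apply: eq_bigr => v _; exact: w_sym.
apply: ler_sum => v _; rewrite /deg (bigD1 x) //= lerDl.
by apply: sumr_ge0 => y _.
Qed.

Lemma cut_ge0 (S : {set V}) : 0 <= cut w S.
Proof. by apply: sumr_ge0 => u _; apply: sumr_ge0 => v _. Qed.

Lemma vol_ge0 (S : {set V}) : 0 <= vol w S.
Proof. by apply: sumr_ge0 => u _; exact: deg_ge0. Qed.

Lemma vol_leG (S : {set V}) : vol w S <= volG w.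
Proof.
rewrite volGE /vol big_mkcond /=; apply: ler_sum => u _.
by case: (u \in S) => //; exact: deg_ge0.
Qed.

Lemma cost_lb (t : hctree V) (S : {set V}) (a : nat) :
  (forall u v, u \in S -> v \notin S -> (a <= lca_size t u v)%N) ->
  a%:R * cut w S <= hc_cost w t.
Proof.
move=> Ha.
pose g u v := if (u \in S) && (v \notin S) then w u v * a%:R else 0.
have Hcut : \sum_u \sum_v g u v = a%:R * cut w S.
  rewrite /cut mulr_sumr [RHS]big_mkcond /=; apply: eq_bigr => u _.
  rewrite /g; case: (u \in S) => /=; last by rewrite big1.
  rewrite mulr_sumr [RHS]big_mkcond /=; apply: eq_bigr => v _.
  by rewrite inE; case: (v \in S) => //=; rewrite mulrC.
have Hle : \sum_u \sum_v (g u v + g v u) <= \sum_u \sum_v w u v * (lca_size t u v)%:R.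
  apply: ler_sum => u _; apply: ler_sum => v _.
  rewrite /g; case Hu: (u \in S); case Hv: (v \in S) => /=;
    rewrite ?add0r ?addr0; try (by apply: mulr_ge0 => //; rewrite ler0n).
  - by apply: ler_wpM2l => //; rewrite ler_nat; apply: Ha; rewrite ?Hu ?Hv.
  - by rewrite w_sym lca_sym; apply: ler_wpM2l => //; rewrite ler_nat; apply: Ha; rewrite ?Hu ?Hv.
have Hsplit : \sum_u \sum_v (g u v + g v u) = a%:R * cut w S + a%:R * cut w S.
  rewrite -Hcut.
  under eq_bigr => x _ do rewrite big_split /=.
  by rewrite big_split /= [X in _ + X]exchange_big.
rewrite /hc_cost; move: Hle; rewrite Hsplit.
set c := a%:R * cut w S; move=> Hle.
lra.
Qed.

Lemma cost_ub t : is_hc_tree t -> hc_cost w t <= 2%:R^-1 * (volG w * (#|V|)%:R).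
Proof.
move=> ht; rewrite /hc_cost; apply: ler_wpM2l; first by rewrite invr_ge0 ler0n.
rewrite volGE mulr_suml; apply: ler_sum => u _; rewrite /deg mulr_suml.
apply: ler_sum => v _; apply: ler_wpM2l => //; rewrite ler_nat.
apply: leq_trans (lca_le_size _ _ _) _.
by rewrite (perm_size ht) -cardE.
Qed.

End G.

Theorem mainTheorem5 (R : realFieldType) (V : finType) (w : V -> V -> R)
  (w_sym : forall u v, w u v = w v u)
  (w_noloop : forall u, w u u = 0)
  (w_ge0 : forall u v, 0 <= w u v)
  (n_ge2 : (2 <= #|V|)%N)
  (Phi : R) (hPhi : is_conductance w Phi) (Phi_gt0 : 0 < Phi)
  (Topt : hctree V) (hopt : optimal_hc_tree w Topt)
  (hAk : ((#|V|%:R - 1) / 2%:R <= (size (leaves (dense_end w Topt)))%:R :> R)) :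
  forall T : hctree V, is_hc_tree T ->
    hc_cost w T <= 8%:R / Phi * hc_cost w Topt.
Proof.
move=> T hT.
have uT : uniq (leaves Topt) by rewrite (perm_uniq hopt.1) enum_uniq.
have hPhi' : forall S, cond_adm w S -> Phi * vol w S <= cut w S.
  move=> S HS; have := hPhi.2 S HS.
  case: (eqVneq (vol w S) 0) => [->|nz]; first by rewrite mulr0 (cut_ge0 w_ge0).
  have vpos : 0 < vol w S by rewrite lt0r nz (vol_ge0 w_ge0).
  by rewrite ler_pdivlMr.
have volG_gt0 : 0 < volG w.
  case: hPhi => [[S _ HS] _]; move: Phi_gt0; rewrite HS /cond_set.
  case: (eqVneq (vol w S) 0) => [->|nz]; first by rewrite invr0 mulr0 ltxx.
  move=> _; apply: lt_le_trans (vol_leG w_ge0 S); by rewrite lt0r nz (vol_ge0 w_ge0).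
have root : vol_node w Topt = volG w.
  rewrite /vol_node (perm_big _ hopt.1) big_enum volGE; apply: eq_bigl => u.
  by rewrite inE.
have := @dense_spec R V w Topt; rewrite root.
case; first lra.
  move=> [B [C [HD [HB [HC Hvol]]]]].
2: by move=> [x [_ Hx]]; have := deg_half w_sym w_noloop w_ge0 x; lra.
rewrite HD in hAk.
have sub : subtree (Node B C) Topt by rewrite -HD; exact: subtree_dense.
have uBC := subtree_uniq sub uT.
move: (uBC); rewrite /= cat_uniq => /and3P[uB dis uC].
set a := size (leaves (Node B C)) in hAk.
have HBC : forall u, u \in leaves B -> u \notin leaves C.
  by move=> u uB'; apply: contra dis => uC'; apply/hasP; exists u.
pose SB := [set x | x \in leaves B].
pose SC := [set x | x \in leaves C].
have volS : forall X : hctree V, uniq (leaves X) ->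
    vol w [set x | x \in leaves X] = vol_node w X.
  move=> X uX; rewrite /vol /vol_node big_uniq //; apply: eq_bigl => u.
  by rewrite inE.
have ne : forall X : hctree V, exists x, x \in leaves X.
  move=> X; case E: (leaves X) => [|x s]; last by exists x; rewrite mem_head.
  by have := size_leaves_gt0 X; rewrite E.
have [xB xBin] := ne B.
have [xC xCin] := ne C.
have admB : cond_adm w SB.
  apply/and3P; split.
  - by apply/set0Pn; exists xB; rewrite inE.
  - apply/negP => /eqP E; have : xC \in SB by rewrite E in_setT.
    rewrite inE => xCB; by move: (HBC _ xCB); rewrite xCin.
  - by rewrite volS.
have admC : cond_adm w SC.
  apply/and3P; split.
  - by apply/set0Pn; exists xC; rewrite inE.
  - apply/negP => /eqP E; have : xB \in SC by rewrite E in_setT.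
    rewrite inE => xBC; by move: (HBC _ xBin); rewrite xBC.
  - by rewrite volS.
have lbB : a%:R * cut w SB <= hc_cost w Topt.
  apply: cost_lb => // u v; rewrite !inE => uB' vB.
  apply: leq_trans (lca_sub v sub uT _); last by rewrite /= mem_cat uB'.
  by rewrite /= uB' (negbTE vB) /= (negbTE (HBC _ uB')).
have lbC : a%:R * cut w SC <= hc_cost w Topt.
  apply: cost_lb => // u v; rewrite !inE => uC' vC.
  apply: leq_trans (lca_sub v sub uT _); last by rewrite /= mem_cat uC' orbT.
  have uBn : u \notin leaves B by apply/negP => uBx; move: (HBC _ uBx); rewrite uC'.
  by rewrite /= (negbTE uBn) (negbTE vC) andbF.
have pB := hPhi' _ admB.
have pC := hPhi' _ admC.
rewrite volS // in pB; rewrite volS // in pC.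
rewrite vol_node_Node in Hvol.
have a_ge1 : 1 <= a%:R :> R by rewrite ler1n size_leaves_gt0.
have ub := cost_ub w_ge0 hT.
set c := hc_cost w Topt in lbB lbC *.
set hT' := hc_cost w T in ub *.
set vB := vol_node w B in pB Hvol *.
set vC := vol_node w C in pC Hvol *.
set G := volG w in volG_gt0 Hvol ub *.
set n := (#|V|)%:R in hAk ub *.
set A := a%:R in hAk a_ge1 lbB lbC *.
have cB := cut_ge0 w_ge0 SB; have cC := cut_ge0 w_ge0 SC.
set kB := cut w SB in pB lbB cB *.
set kC := cut w SC in pC lbC cC *.
have Q1 : A * (Phi * vB) <= A * kB by apply: ler_wpM2l => //; lra.
have Q2 : A * (Phi * vC) <= A * kC by apply: ler_wpM2l => //; lra.
have Q3 : A * Phi * G <= 4%:R * c.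
  have : A * Phi * (G / 2%:R) <= A * Phi * (vB + vC).
    by apply: ler_wpM2l; [apply: mulr_ge0; lra | lra].
  move=> H; nra.
have Q4 : G * n <= G * (4%:R * A) by apply: ler_wpM2l; lra.
rewrite mulrAC ler_pdivlMr //. nra.
Qed.
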